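(* Let $U$ be the transition matrix of a quantum random walk (QRW) on $\mathcal I=\mathbb Z$ or on $\mathcal I=\mathbb Z_{\ge 0}$ with arbitrary non trivial (not necessarily equal) coins, and let $\mu_n$ ($n\ge 0$) denote the $n$-th moment of the orthogonality measure associated with the walk (scalar if $\mathcal I=\mathbb Z_{\ge0}$, $2\times2$ matrix valued if $\mathcal I=\mathbb Z$). Then, as $n\to\infty$: (1) $U^n$ converges weakly to zero if and only if $\mu_n\to 0$. (2) For any sequence $(e^{i\theta_n})_{n\ge0}$ of phases ($\theta_n\in\mathbb R$), $e^{-i\theta_n}U^n$ has a non null weak limit if and only if $e^{-i\theta_n}\mu_n$ converges to a non null limit and $\lim_{n\to\infty}e^{i(\theta_{n+1}-\theta_n)}$ exists.
   Context: Coins: for each site $i\in\mathcal I$, $C_i=\begin{pmatrix}c^i_{11}&c^i_{12}\\ c^i_{21}&c^i_{22}\end{pmatrix}$ is a $2\times2$ unitary matrix; it is called non trivial if $c^i_{11}\neq0$ (equivalently $c^i_{22}\ne0$). All coins are assumed non trivial. The Hilbert space is $\ell^2$ over the pure states $|i\rangle\otimes|s\rangle$, $i\in\mathcal I$, $s\in\{\uparrow,\downarrow\}$; a matrix $U=(U_{j,k})$ indexed by pure states has $U_{j,k}$ = amplitude of the one-step transition from $j$ to $k$, states evolve as row vectors $\psi_n=\psi_0U^n$. Case $\mathcal I=\mathbb Z_{\ge0}$: number the pure states $|0\uparrow\rangle,|0\downarrow\rangle,|1\uparrow\rangle,|1\downarrow\rangle,\dots$ as $0,1,2,3,\dots$ (so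 $|i\uparrow\rangle=2i$, $|i\downarrow\rangle=2i+1$). The unitary transition matrix $U$ has as only non-zero entries: $U_{2i,2i+2}=c^i_{11}$, $U_{2i+1,2i+2}=c^i_{12}$ for $i\ge0$; $U_{2i,2i-1}=c^i_{21}$, $U_{2i+1,2i-1}=c^i_{22}$ for $i\ge1$; and $U_{0,0}=c^0_{21}$, $U_{1,0}=c^0_{22}$. The associated orthogonality measure $\mu$ is the unique probability measure on the unit circle $\mathbb T$ with $\int_{\mathbb T}z^n\,d\mu(z)=(U^n)_{0,0}$ for all $n\in\mathbb Z$; its moments are $\mu_n=\int_{\mathbb T}z^n d\mu$. Case $\mathcal I=\mathbb Z$: the unitary transition matrix is given by $|i\uparrow\rangle\mapsto c^i_{11}|i+1\uparrow\rangle+c^i_{21}|i-1\downarrow\rangle$, $|i\downarrow\rangle\mapsto c^i_{12}|i+1\uparrow\rangle+c^i_{22}|i-1\downarrow\rangle$ (i.e. $U_{i\uparrow,(i+1)\uparrow}=c^i_{11}$, $U_{i\uparrow,(i-1)\downarrow}=c^i_{21}$, $U_{i\downarrow,(i+1)\uparrow}=c^i_{12}$, $U_{i\downarrow,(i-1)\downarrow}=c^i_{22}$, all other entries $0$). Reorder (''fold'') the pure states as $0,1,2,\dots$ via $4m\mapsto|m\uparrow\rangle$, $4m+1\mapsto|-(m+1)\downarrow\rangle$, $4m+2\mapsto|-(m+1)\uparrow\rangle$, $4m+3\mapsto|m\downarrow\rangle$ ($m\ge0$), and let $\mathbf U$ be $U$ in this order, viewed as a matrix of $2\times2$ blocks $(\mathbf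 U)_{j,k}$ (rows $2j,2j+1$, columns $2k,2k+1$). The associated orthogonality measure $\boldsymbol\mu$ is the unique $2\times2$ positive semidefinite matrix valued measure on $\mathbb T$ with $\int_{\mathbb T}z^n d\boldsymbol\mu(z)=(\mathbf U^n)_{0,0}$ for all $n\in\mathbb Z$; its moments are $\boldsymbol\mu_n=\int_{\mathbb T}z^nd\boldsymbol\mu$. Weak convergence: a sequence of (uniformly bounded) matrices $A_n$ converges weakly to $A$ if $(A_n)_{j,k}\to A_{j,k}$ for all indices $j,k$. *)

(* Defs.v *)
From HB Require Import structures.
From mathcomp Require Import all_boot all_order all_algebra.
From mathcomp Require Import complex zify.
From mathcomp Require Import reals trigo.
Set Implicit Arguments. Unset Strict Implicit. Unset Printing Implicit Defensive.
Import Order.TTheory GRing.Theory Num.Theory.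
Local Open Scope ring_scope.
Local Open Scope complex_scope.

Section QRW.
Variable R : realType.
Local Notation C := R[i].

Definition unitary (M : 'M[C]_2) : Prop := M *m (map_mx conjc M)^T = 1%:M.
(* non trivial coin: c_11 <> 0 (entries are 0-indexed in mathcomp) *)
Definition nontrivial (M : 'M[C]_2) : Prop := M 0 0 != 0.

Definition imx := nat -> nat -> C.

(* Product U * A of infinite matrices, where U is row-finite with
   U j l = 0 for l >= j + 5 (true for both transition matrices below),
   so that the infinite sum reduces to this finite one. *)
Definition rf_mul (U A : imx) : imx :=
  fun j k => \sum_(l < j + 5) U j l * A l k.

Fixpoint mpow (U : imx) (n : nat) : imx :=
  match n with
  | 0 => fun j k => (j == k)%:R
  | n'.+1 => rf_mul U (mpow U n')
  end.

(* spin: false = up, true = down; coin column index *)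
Definition sp (b : bool) : 'I_2 := if b then 1 else 0.

(* Case I = Z_{>=0}: |i up> = 2i, |i down> = 2i+1.
   |i s> -> c^i_{1s} |i+1 up> + c^i_{2s} |i-1 down>, with the reflection
   at 0: U_{0,0} = c^0_{21}, U_{1,0} = c^0_{22}. *)
Definition UN (c : nat -> 'M[C]_2) : imx :=
  fun j k =>
    let i := j./2 in let s := sp (odd j) in
    if k == (2 * i + 2)%N then c i 0 s
    else if (0 < i)%N && (k == (2 * i - 1)%N) then c i 1 s
    else if (i == 0)%N && (k == 0)%N then c 0%N 1 s
    else 0.

Definition muN (c : nat -> 'M[C]_2) (n : nat) : C := mpow (UN c) n 0 0.

Definition UZ (c : int -> 'M[C]_2) (x y : int * bool) : C :=
  if (y.1 == x.1 + 1) && (y.2 == false) then c x.1 0 (sp x.2)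
  else if (y.1 == x.1 - 1) && (y.2 == true) then c x.1 1 (sp x.2)
  else 0.

Definition fold (j : nat) : int * bool :=
  let m := (j %/ 4)%N in
  match (j %% 4)%N with
  | 0 => (Posz m, false)
  | 1 => (- Posz m.+1, true)
  | 2 => (- Posz m.+1, false)
  | _ => (Posz m, true)
  end.

Definition UZf (c : int -> 'M[C]_2) : imx := fun j k => UZ c (fold j) (fold k).

Definition muZ (c : int -> 'M[C]_2) (n : nat) : 'M[C]_2 :=
  \matrix_(a < 2, b < 2) mpow (UZf c) n a b.

Definition cvgC (u : nat -> C) (l : C) : Prop :=
  forall eps : R, 0 < eps -> exists N : nat, forall n : nat, (N <= n)%N ->
    `|u n - l| < eps%:C.

Definition weak_cvg (A : nat -> imx) (L : imx) : Prop :=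
  forall j k, cvgC (fun n => A n j k) (L j k).

Definition cvg_mx2 (M : nat -> 'M[C]_2) (L : 'M[C]_2) : Prop :=
  forall a b : 'I_2, cvgC (fun n => M n a b) (L a b).

Definition expi (t : R) : C := (cos t +i* sin t)%C.

End QRW.

(* Sanity checks: both transition matrices are row-finite with U j l = 0 for
   l >= j + 5, so rf_mul computes the genuine (infinite) matrix product. *)
Lemma UN_support (R : realType) (c : nat -> 'M[R[i]]_2) j k :
  (j + 5 <= k)%N -> UN c j k = 0.
Proof.
move=> hk; rewrite /UN.
have hj := odd_double_half j; rewrite -mul2n in hj.
have h1 : (k == 2 * j./2 + 2)%N = false by apply/eqP; lia.
have h2 : (k == 2 * j./2 - 1)%N = false by apply/eqP; lia.
have h3 : (k == 0)%N = false by apply/eqP; lia.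
by rewrite h1 h2 h3 andbF andbF.
Qed.
Lemma UZf_support (R : realType) (c : int -> 'M[R[i]]_2) j k :
  (j + 5 <= k)%N -> UZf c j k = 0.
Proof.
move=> hk; rewrite /UZf /UZ /fold.
have hj := divn_eq j 4; have hk4 := divn_eq k 4.
have hj4 := ltn_pmod j (isT : (0 < 4)%N); have hk44 := ltn_pmod k (isT : (0 < 4)%N).
move: (j %/ 4)%N (j %% 4)%N (k %/ 4)%N (k %% 4)%N hj hk4 hj4 hk44 => a r b s hj hk4 hr hs.
have : (a + 1 <= b)%N by lia.
move=> hab.
case: r hr hj => [|[|[|[|r]]]] // _ hj; case: s hs hk4 => [|[|[|[|s]]]] // _ hk4 /=;
  rewrite ?andbF ?andbT //;
  repeat (case: eqP => //=; try lia; intros); rewrite ?andbF //.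
Qed.

(* Main.v *)
Require Import Defs.
From HB Require Import structures.
From mathcomp Require Import all_boot all_order all_algebra.
From mathcomp Require Import complex.
From mathcomp Require Import reals trigo.
From mathcomp Require Import ring lra zify.
From Stdlib Require Import Classical ClassicalEpsilon.
Set Implicit Arguments. Unset Strict Implicit. Unset Printing Implicit Defensive.
Import Order.TTheory GRing.Theory Num.Theory.
Local Open Scope ring_scope.
Local Open Scope complex_scope.


Section Cvg.
Variable R : realType.
Local Notation C := R[i].
Implicit Types u v r : nat -> C.

Definition nC (z : C) : R := Normc.normc z.
Lemma normE (z : C) : `|z| = (nC z)%:C. Proof. by []. Qed.
Lemma ltnC (z : C) e : (`|z| < e%:C) = (nC z < e). Proof. by rewrite normE ltcR. Qed.
Lemma nC_ge0 z : 0 <= nC z. Proof. rewrite -lecR; exact: (normr_ge0 z). Qed.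
Lemma nCD x y : nC (x + y) <= nC x + nC y. Proof. exact: le_normcD. Qed.
Lemma nCM x y : nC (x * y) = nC x * nC y. Proof. exact: Normc.normcM. Qed.
Lemma nCN x : nC (- x) = nC x. Proof. exact: normcN. Qed.
Lemma nC0 : nC 0 = 0. Proof. exact: Normc.normc0. Qed.
Lemma nC1 : nC 1 = 1. Proof. exact: Normc.normc1. Qed.
Lemma nCV x : nC x^-1 = (nC x)^-1. Proof. exact: Normc.normcV. Qed.
Lemma nC_eq0 z : (nC z == 0) = (z == 0).
Proof. by apply/eqP/eqP => [/Normc.eq0_normc|->] //; rewrite nC0. Qed.
Lemma nCB x y : nC (x - y) = nC (y - x). Proof. by rewrite -nCN opprB. Qed.

Definition cv u l := forall e : R, 0 < e -> exists N, forall n, (N <= n)%N -> nC (u n - l) < e.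

Lemma cvgCE u l : cvgC u l <-> cv u l.
Proof.
split=> h e e0; have [N hN] := h e e0; exists N => n /hN; by rewrite ltnC.
Qed.

Lemma cv_ev u v l : (exists N, forall n, (N <= n)%N -> u n = v n) -> cv u l -> cv v l.
Proof.
move=> [M hM] h e e0; have [N hN] := h e e0; exists (maxn M N) => n hn.
rewrite -hM; last by lia. apply: hN; lia.
Qed.

Lemma cv_ext u v l : (forall n, u n = v n) -> cv u l -> cv v l.
Proof. by move=> h; apply: cv_ev; exists 0%N. Qed.

Lemma cv_cst a : cv (fun _ => a) a.
Proof. by move=> e e0; exists 0%N => n _; rewrite subrr nC0. Qed.

Lemma cv_add u v a b : cv u a -> cv v b -> cv (fun n => u n + v n) (a + b).
Proof.
move=> hu hv e e0; have e2 : 0 < e / 2 by lra.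
have [N1 h1] := hu _ e2; have [N2 h2] := hv _ e2; exists (maxn N1 N2) => n hn.
have -> : u n + v n - (a + b) = (u n - a) + (v n - b) by ring.
apply: le_lt_trans (nCD _ _) _.
have := h1 n ltac:(lia); have := h2 n ltac:(lia); lra.
Qed.

Lemma cv_scale k u a : cv u a -> cv (fun n => k * u n) (k * a).
Proof.
move=> hu e e0; have hk : 0 < nC k + 1 by have := nC_ge0 k; lra.
have [N hN] := hu (e / (nC k + 1)) (divr_gt0 e0 hk); exists N => n /hN h.
rewrite -mulrBr nCM; apply: le_lt_trans (_ : nC k * nC (u n - a) <= (nC k + 1) * nC (u n - a)) _.
  by apply: ler_wpM2r; [exact: nC_ge0|lra].
by rewrite mulrC -ltr_pdivlMr.
Qed.

Lemma cv0P u l : cv u l <-> cv (fun n => u n - l) 0.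
Proof. by split=> h e /h [N hN]; exists N => n /hN; rewrite subr0. Qed.

Lemma cv_bnd0 r v : (exists N M, forall n, (N <= n)%N -> nC (r n) <= M) -> cv v 0 ->
  cv (fun n => r n * v n) 0.
Proof.
move=> [N [M hM]] hv e e0.
have hM1 : 0 < `|M| + 1 by have := normr_ge0 M; lra.
have [N2 h2] := hv _ (divr_gt0 e0 hM1); exists (maxn N N2) => n hn.
rewrite subr0 nCM; have := h2 n ltac:(lia); rewrite subr0 => h.
have hr := hM n ltac:(lia).
have hM2 : M <= `|M| by exact: ler_norm.
apply: le_lt_trans (_ : nC (r n) * nC (v n) <= (`|M| + 1) * nC (v n)) _.
  by apply: ler_wpM2r; [exact: nC_ge0|lra].
by rewrite mulrC -ltr_pdivlMr.
Qed.

Lemma cv_bounded u a : cv u a -> exists N M, forall n, (N <= n)%N -> nC (u n) <= M.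
Proof.
move=> /(_ 1 ltr01) [N hN]; exists N, (nC a + 1) => n /hN h.
have := nCD (u n - a) a; rewrite subrK; lra.
Qed.

Lemma cv_mul u v a b : cv u a -> cv v b -> cv (fun n => u n * v n) (a * b).
Proof.
move=> hu hv; apply: (proj2 (@cv0P (fun n => u n * v n) (a*b))).
have h1 : cv (fun n => u n * (v n - b)) 0.
  apply: (@cv_bnd0 u (fun n => v n - b)); [exact: cv_bounded hu | exact: (proj1 (@cv0P v b) hv)].
have h2 : cv (fun n => b * (u n - a)) (b * 0) by apply: cv_scale; exact: (proj1 (@cv0P u a) hu).
rewrite mulr0 in h2.
have := cv_add h1 h2; rewrite addr0; apply: cv_ext => n; ring.
Qed.

Lemma cv_shift u l : cv u l -> cv (fun n => u n.+1) l.
Proof. by move=> h e /h [N hN]; exists N => n hn; apply: hN; lia. Qed.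

Lemma cv_back u l : cv u l -> cv (fun n => u n.-1) l.
Proof. by move=> h e /h [N hN]; exists N.+1 => n hn; apply: hN; lia. Qed.

Lemma cv_unique u a b : cv u a -> cv u b -> a = b.
Proof.
move=> ha hb; apply/eqP; rewrite -subr_eq0 -nC_eq0; apply/eqP.
apply/le_anti; rewrite nC_ge0 andbT; apply/ler_addgt0Pr => e e0.
rewrite add0r; have e2 : 0 < e / 2 by lra.
have [N1 h1] := ha _ e2; have [N2 h2] := hb _ e2.
have := h1 (maxn N1 N2) ltac:(lia); have := h2 (maxn N1 N2) ltac:(lia).
set m := maxn N1 N2.
have : nC (a - b) <= nC (a - u m) + nC (u m - b).
  by have := nCD (a - u m) (u m - b); rewrite addrA subrK.
rewrite (nCB a (u m)); lra.
Qed.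

Lemma cv_sum N (u : 'I_N -> nat -> C) (a : 'I_N -> C) :
  (forall i, cv (u i) (a i)) -> cv (fun n => \sum_(i < N) u i n) (\sum_(i < N) a i).
Proof.
elim: N u a => [|N IH] u a h.
  by rewrite big_ord0; apply: (cv_ext _ (cv_cst 0)) => n; rewrite !big_ord0.
rewrite big_ord_recr /=; apply: (cv_ext _ (cv_add (IH _ _ (fun i => h (widen_ord (leqnSn N) i))) (h ord_max))).
by move=> n; rewrite big_ord_recr.
Qed.

Lemma cv_ratio u v r a b : cv u a -> cv v b -> b != 0 -> (forall n, u n = r n * v n) ->
  cv r (a / b).
Proof.
move=> hu hv b0 huv.
have nb : 0 < nC b by rewrite lt_def nC_eq0 b0 nC_ge0.
have [N hN] := hv _ (divr_gt0 nb (ltr0Sn _ 1)).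
have hz : cv (fun n => u n - (a / b) * v n) (a + (- (a / b)) * b).
  by apply: (cv_ext _ (cv_add hu (cv_scale (-(a/b)) hv))) => n; rewrite mulNr.
rewrite mulNr mulfVK // subrr in hz.
have hb : exists N M, forall n, (N <= n)%N -> nC ((v n)^-1) <= M.
  exists N, (2 / nC b) => n /hN h.
  have h2 : nC b <= nC (v n) + nC (b - v n) by have := nCD (v n) (b - v n); rewrite addrC subrK.
  rewrite nCB in h2.
  have hv0 : nC b / 2 <= nC (v n) by lra.
  have hp : 0 < nC b / 2 by lra.
  rewrite nCV; have -> : 2 / nC b = (nC b / 2)^-1 by rewrite invf_div.
  by rewrite lef_pV2 // posrE; lra.
apply: (proj2 (@cv0P r (a/b))); apply: (cv_ev _ (cv_bnd0 hb hz)).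
exists N => n /hN h.
have vn0 : v n != 0.
  apply/negP => /eqP v0; move: h; rewrite v0 sub0r nCN; lra.
by rewrite /= huv; field; rewrite b0 vn0.
Qed.

Lemma cv_norm1_neq0 r w : cv r w -> (forall n, nC (r n) = 1) -> w != 0.
Proof.
move=> h h1; apply/negP => /eqP w0; have [N hN] := h 1 ltr01.
by move: (hN N (leqnn N)); rewrite w0 subr0 h1 ltxx.
Qed.

End Cvg.


Definition idx (x : int * bool) : nat :=
  if (0 <= x.1)%R then (4 * `|x.1| + (if x.2 then 3 else 0))%N
  else (4 * (`|x.1| - 1) + (if x.2 then 1 else 2))%N.

Lemma idx_b1 (i : int) s : (idx ((i + 1)%R, false) < idx (i, s) + 5)%N.
Proof. rewrite /idx /=; case: s; case: ifP; case: ifP; lia. Qed.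
Lemma idx_b2 (i : int) s : (idx ((i - 1)%R, true) < idx (i, s) + 5)%N.
Proof. rewrite /idx /=; case: s; case: ifP; case: ifP; lia. Qed.
Lemma idx_b3 (j : int) s : (idx ((j - 1)%R, s) < idx (j, false) + 5)%N.
Proof. rewrite /idx /=; case: s; case: ifP; case: ifP; lia. Qed.
Lemma idx_b4 (j : int) s : (idx ((j + 1)%R, s) < idx (j, true) + 5)%N.
Proof. rewrite /idx /=; case: s; case: ifP; case: ifP; lia. Qed.

Lemma div4 q r : (r < 4)%N -> ((4 * q + r) %/ 4 = q)%N /\ ((4 * q + r) %% 4 = r)%N.
Proof. by move=> hr; rewrite mulnC divnMDl // modnMDl divn_small // modn_small // addn0. Qed.

Lemma foldK x : fold (idx x) = x.
Proof.
case: x => i s; rewrite /idx /fold /=.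
case: ifP => hi.
  have hm : i = Posz `|i| by lia.
  case: s.
  - by have [-> ->] := @div4 `|i| 3 isT; rewrite -hm.
  - by have [-> ->] := @div4 `|i| 0 isT; rewrite -hm.
have hm : i = - Posz (`|i| - 1).+1 by lia.
case: s.
- by have [-> ->] := @div4 (`|i| - 1) 1 isT; rewrite -hm.
- by have [-> ->] := @div4 (`|i| - 1) 2 isT; rewrite -hm.
Qed.

Lemma idxK j : idx (fold j) = j.
Proof.
rewrite /fold; have hj := divn_eq j 4; have hr := ltn_pmod j (isT : (0 < 4)%N).
move: (j %/ 4)%N (j %% 4)%N hj hr => q r hj hr.
case: r hj hr => [|[|[|[|r]]]] hj hr //=; rewrite /idx /=; lia.
Qed.


Section Mx.
Variable R : realType.
Local Notation C := R[i].

Lemma sum2 N (F : nat -> C) a b : a != b -> (a < N)%N -> (b < N)%N ->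
  (forall l, l != a -> l != b -> F l = 0) -> \sum_(l < N) F l = F a + F b.
Proof.
move=> ab ha hb h.
rewrite (bigD1 (Ordinal ha)) //= (bigD1 (Ordinal hb)) /=; last by rewrite -val_eqE /= eq_sym.
rewrite big1 ?addr0 // => l /andP [h1 h2]; apply: h; [move: h2 | move: h1]; by rewrite -val_eqE.
Qed.

Lemma sum1 N (F : nat -> C) a : (a < N)%N ->
  (forall l, l != a -> F l = 0) -> \sum_(l < N) F l = F a.
Proof.
move=> ha h; rewrite (bigD1 (Ordinal ha)) //= big1 ?addr0 // => l h1; apply: h.
by move: h1; rewrite -val_eqE.
Qed.

Lemma sum_out N (F : nat -> C) : (forall l, (N <= l)%N -> F l = 0) -> forall M, (N <= M)%N ->
  \sum_(l < M) F l = \sum_(l < N) F l.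
Proof.
move=> h M hM; rewrite -(subnKC hM) big_split_ord /= [X in _ + X]big1 ?addr0 // => i _.
by apply: h; rewrite leq_addr.
Qed.

Lemma mpow_r (U : imx R) : (forall j k, (j + 5 <= k)%N -> U j k = 0) ->
  (forall m k, (k + 5 <= m)%N -> U m k = 0) ->
  forall n j k, mpow U n.+1 j k = \sum_(m < k + 5) mpow U n j m * U m k.
Proof.
move=> hr hc; elim=> [|n IH] j k.
  rewrite /= /rf_mul.
  case: (ltnP k (j + 5)) => hk.
    rewrite (@sum1 _ (fun l => U j l * (l == k)%:R) k hk); last by move=> l /negbTE ->; rewrite mulr0.
    case: (ltnP j (k + 5)) => hj.
      rewrite (@sum1 _ (fun m => (j == m)%:R * U m k) j hj); first by rewrite !eqxx mulr1 mul1r.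
      by move=> l; rewrite eq_sym => /negbTE ->; rewrite mul0r.
    rewrite eqxx mulr1 hc // big1 // => m _; rewrite (_ : (j == m) = false) ?mul0r //.
    by apply/eqP => e; have := ltn_ord m; lia.
  rewrite big1; last by move=> l _; rewrite (_ : (l == k :> nat) = false) ?mulr0 //; apply/eqP => e; have := ltn_ord l; lia.
  rewrite big1 // => m _; case: eqP => [e|_]; last by rewrite mul0r.
  by rewrite -e hr // mulr0.
rewrite -[LHS]/(rf_mul U (mpow U n.+1) j k) /rf_mul.
under eq_bigr => l _ do rewrite IH mulr_sumr.
rewrite exchange_big /=; apply: eq_bigr => m _.
rewrite /rf_mul.
by rewrite mulr_suml; apply: eq_bigr => l _; rewrite mulrA.
Qed.

End Mx.


Section Clo.
Variable R : realType.
Local Notation C := R[i].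
Implicit Types g h : nat -> C.

Definition closedP (P : (nat -> C) -> Prop) :=
  [/\ (forall g h a b, P g -> P h -> P (fun n => a * g n + b * h n)),
      (forall g, P g -> P (fun n => g n.+1)),
      (forall g, P g -> P (fun n => g n.-1)) &
      (forall g h, (exists N, forall n, (N <= n)%N -> g n = h n) -> P g -> P h)].

Section CP.
Variable P : (nat -> C) -> Prop.
Hypothesis hP : closedP P.

Lemma solveZ X Y Z a b : (forall n, X n.+1 = a * Y n + b * Z n) -> b != 0 ->
  P X -> P Y -> P Z.
Proof.
case: hP => hl hs _ he eq b0 hX hY.
have := hl _ _ (b^-1) (- (a / b)) (hs _ hX) hY.
apply: he; exists 0%N => n _; rewrite eq; field; exact: b0.
Qed.

Lemma solveY X Y Z a b : (forall n, X n.+1 = a * Y n + b * Z n) -> a != 0 ->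
  P X -> P Z -> P Y.
Proof. by move=> eq; apply: (@solveZ X Z Y b a) => n; rewrite eq addrC. Qed.

Lemma fwdX X Y Z a b : (forall n, X n.+1 = a * Y n + b * Z n) -> P Y -> P Z -> P X.
Proof.
case: hP => hl _ hb he eq hY hZ.
have := hb _ (hl _ _ a b hY hZ); apply: he; exists 1%N => n hn.
by rewrite -eq prednK //; lia.
Qed.
End CP.

Section Inst.
Variable al : nat -> C.
Hypothesis hal : forall n, nC (al n) = 1.

Lemma al_neq0 n : al n != 0.
Proof. by rewrite -nC_eq0 hal oner_eq0. Qed.

Definition P0 g := cv (fun n => al n * g n) 0.

Lemma closedP0 : closedP P0.
Proof.
split.
- move=> g h a b hg hh; rewrite /P0.
  have := cv_add (cv_scale a hg) (cv_scale b hh); rewrite !mulr0 addr0.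
  by apply: cv_ext => n; ring.
- move=> g hg; rewrite /P0.
  have hb : exists N M, forall n, (N <= n)%N -> nC (al n / al n.+1) <= M.
    by exists 0%N, 1 => n _; rewrite nCM nCV !hal invr1 mulr1.
  have := cv_bnd0 hb (cv_shift hg).
  apply: cv_ext => n /=; field; exact: al_neq0.
- move=> g hg; rewrite /P0.
  have hb : exists N M, forall n, (N <= n)%N -> nC (al n / al n.-1) <= M.
    by exists 0%N, 1 => n _; rewrite nCM nCV !hal invr1 mulr1.
  have := cv_bnd0 hb (cv_back hg).
  apply: cv_ext => n /=; field; exact: al_neq0.
- move=> g h [N hN]; apply: cv_ev; exists N => n /hN ->; done.
Qed.

Variable w : C.
Hypothesis hw : cv (fun n => al n / al n.+1) w.

Definition Pw g := exists l, cv (fun n => al n * g n) l.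

Lemma w_neq0 : w != 0.
Proof.
apply: (cv_norm1_neq0 hw) => n; by rewrite nCM nCV !hal invr1 mulr1.
Qed.

Lemma closedPw : closedP Pw.
Proof.
split.
- move=> g h a b [l1 hg] [l2 hh]; exists (a * l1 + b * l2).
  have := cv_add (cv_scale a hg) (cv_scale b hh).
  by apply: cv_ext => n; ring.
- move=> g [l hg]; exists (w * l).
  have := cv_mul hw (cv_shift hg).
  apply: cv_ext => n /=; field; exact: al_neq0.
- move=> g [l hg]; exists (w^-1 * l).
  have hi : cv (fun n => (al n.-1 / al n.-1.+1)^-1) (1 / w).
    apply: (@cv_ratio _ (fun _ => 1) _ _ 1 w (cv_cst 1) (cv_back hw) w_neq0).
    move=> n; rewrite mulVf //; rewrite mulf_eq0 negb_or invr_eq0 !al_neq0 //.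
  rewrite mul1r in hi.
  have := cv_mul hi (cv_back hg).
  apply: cv_ev; exists 1%N => n hn; rewrite prednK; last by lia.
  field; rewrite !al_neq0 //.
- move=> g h [N hN] [l hg]; exists l; apply: cv_ev hg; exists N => n /hN ->; done.
Qed.
End Inst.

End Clo.


Section Expi.
Variable R : realType.
Lemma expiD (a b : R) : expi a * expi b = expi (a + b).
Proof.
rewrite /expi; simpc; rewrite cosD sinD; congr (_ +i* _); ring.
Qed.
Lemma nC_expi (a : R) : nC (expi a) = 1.
Proof. by rewrite /nC /expi /= cos2Dsin2 sqrtr1. Qed.
End Expi.


Section N.
Variable R : realType.
Local Notation C := R[i].
Variable c : nat -> 'M[C]_2.

Definition prv (i : nat) : nat := (2 * i - 1)%N.

Lemma UN_row (i : nat) (s : bool) j l : j = (2 * i + s)%N ->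
  UN c j l = if l == (2 * i + 2)%N then c i 0 (sp s) else if l == prv i then c i 1 (sp s) else 0.
Proof.
move=> ->; rewrite /UN.
have -> : ((2 * i + s)./2 = i)%N by rewrite addnC mul2n half_bit_double.
have -> : odd (2 * i + s) = s by rewrite oddD oddM /=; case: s.
rewrite /prv; case: i => [|i] /=.
  by repeat (case: eqP => //= ?); exfalso; lia.
by repeat (case: eqP => //= ?); exfalso; lia.
Qed.

Lemma UN_csupport m k : (k + 5 <= m)%N -> UN c m k = 0.
Proof.
move=> hk; have hm := odd_double_half m; rewrite -mul2n addnC in hm.
have hb := leq_b1 (odd m).
rewrite (UN_row k (esym hm)) /prv.
repeat (case: eqP => //= ?); exfalso; lia.
Qed.

Local Notation f j k := (fun n => mpow (UN c) n j k).

Lemma rowN (i : nat) (s : bool) k n :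
  mpow (UN c) n.+1 (2 * i + s)%N k =
  c i 0 (sp s) * mpow (UN c) n (2 * i + 2)%N k + c i 1 (sp s) * mpow (UN c) n (prv i) k.
Proof.
rewrite -[LHS]/(rf_mul (UN c) (mpow (UN c) n) (2 * i + s)%N k) /rf_mul.
have E := @sum2 _ (2 * i + s + 5)%N (fun l => UN c (2 * i + s)%N l * mpow (UN c) n l k) (2 * i + 2)%N (prv i).
simpl in E; rewrite {}E.
- by rewrite !(UN_row _ (erefl _)) eqxx (_ : (prv i == 2 * i + 2)%N = false) ?eqxx //;
    apply/eqP; rewrite /prv; lia.
- by apply/eqP; rewrite /prv; lia.
- by case: s; lia.
- by rewrite /prv; case: s; lia.
- move=> l /negbTE h1 /negbTE h2; by rewrite (UN_row _ (erefl _)) h1 h2 mul0r.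
Qed.

Lemma UN_col (i : nat) (t : bool) m :
  UN c m (if t then prv i else (2 * i + 2)%N) =
  if m == (2 * i)%N then c i (sp t) 0 else if m == (2 * i + 1)%N then c i (sp t) 1 else 0.
Proof.
have hm := odd_double_half m; rewrite -mul2n addnC in hm.
have hb := leq_b1 (odd m).
rewrite (UN_row _ (esym hm)) /prv.
case: t; case: (odd m) hm hb => hm hb /=;
  repeat (case: eqP => //= ?); try (exfalso; lia); congr (c _ _ _); lia.
Qed.

Lemma colN (i : nat) (t : bool) j n :
  mpow (UN c) n.+1 j (if t then prv i else (2 * i + 2)%N) =
  mpow (UN c) n j (2 * i)%N * c i (sp t) 0 + mpow (UN c) n j (2 * i + 1)%N * c i (sp t) 1.
Proof.
rewrite (mpow_r (fun j k => @UN_support R c j k) UN_csupport).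
set k := (if t then prv i else (2 * i + 2)%N).
have E := @sum2 _ (k + 5)%N (fun m => mpow (UN c) n j m * UN c m k) (2 * i)%N (2 * i + 1)%N.
simpl in E; rewrite {}E {}/k.
- by rewrite !UN_col eqxx (_ : (2 * i + 1 == 2 * i)%N = false) ?eqxx //; apply/eqP; lia.
- by apply/eqP; lia.
- by rewrite /prv; case: t; lia.
- by rewrite /prv; case: t; lia.
- move=> l /negbTE h1 /negbTE h2; by rewrite UN_col h1 h2 mulr0.
Qed.

Lemma colN' (i : nat) (t : bool) j n :
  mpow (UN c) n.+1 j (if t then prv i else (2 * i + 2)%N) =
  c i (sp t) 0 * mpow (UN c) n j (2 * i)%N + c i (sp t) 1 * mpow (UN c) n j (2 * i + 1)%N.
Proof. by rewrite colN mulrC [X in _ + X]mulrC. Qed.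

Section Chain.
Hypothesis h00 : forall i, c i 0 0 != 0.
Hypothesis h11 : forall i, c i 1 1 != 0.
Variable P : (nat -> C) -> Prop.
Hypothesis hP : closedP P.

Lemma colchainN j : P (f j 0%N) -> forall k, P (f j k).
Proof.
move=> H0.
have Q : forall i, P (f j (2 * i)%N) /\ P (f j (2 * i + 1)%N).
  elim=> [|i [h0 h1]].
    split; first exact: H0.
    exact: (solveZ hP (colN' 0 true j) (h11 0) H0 H0).
  split.
    have E := colN' i false j; rewrite (_ : (2 * i + 2 = 2 * i.+1)%N) in E; last by lia.
    exact: (fwdX hP E h0 h1).
  have E := colN' i.+1 true j; rewrite (_ : (prv i.+1 = 2 * i + 1)%N) /= in E; last by rewrite /prv; lia.
  have hY : P (f j (2 * i.+1)%N).
    have E2 := colN' i false j; rewrite (_ : (2 * i + 2 = 2 * i.+1)%N) in E2; last by lia.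
    exact: (fwdX hP E2 h0 h1).
  exact: (solveZ hP E (h11 _) h1 hY).
move=> k; have hk := odd_double_half k; rewrite -mul2n addnC in hk.
have [q1 q2] := Q k./2; rewrite -hk; case: (odd k) => //=; by rewrite addn0.
Qed.

Lemma rowchainN k : P (f 0%N k) -> forall j, P (f j k).
Proof.
move=> H0.
have Q : forall i, [/\ P (f (2 * i + 2)%N k), P (f (2 * i + 1)%N k) & P (f (2 * i)%N k)].
  elim=> [|i [h2 h1 h0]].
    have E0 := rowN 0 false k.
    rewrite (_ : (2 * 0 + false = 0)%N) // (_ : (2 * 0 + 2 = 2)%N) // (_ : prv 0 = 0%N) // in E0.
    have h2 : P (f 2%N k) := solveY hP E0 (h00 0) H0 H0.
    have E1 := rowN 0 true k.
    rewrite (_ : (2 * 0 + true = 1)%N) // (_ : (2 * 0 + 2 = 2)%N) // (_ : prv 0 = 0%N) // in E1.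
    have h1 := fwdX (X := f 1%N k) hP E1 h2 H0.
    rewrite (_ : (2 * 0 + 2 = 2)%N); last by [].
    rewrite (_ : (2 * 0 + 1 = 1)%N); last by [].
    rewrite (_ : (2 * 0 = 0)%N); last by [].
    by split.
  have E := rowN i.+1 false k.
  rewrite (_ : (2 * i.+1 + false = 2 * i + 2)%N) in E; last by lia.
  rewrite (_ : (prv i.+1 = 2 * i + 1)%N) in E; last by rewrite /prv; lia.
  have h4 := solveY hP E (h00 _) h2 h1.
  have E2 := rowN i.+1 true k.
  rewrite (_ : (2 * i.+1 + true = 2 * i.+1 + 1)%N) in E2; last by lia.
  rewrite (_ : (prv i.+1 = 2 * i + 1)%N) in E2; last by rewrite /prv; lia.
  have h3 := fwdX (X := f (2 * i.+1 + 1)%N k) hP E2 h4 h1.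
  rewrite (_ : (2 * i.+1 = 2 * i + 2)%N) in h4 h3 *; last by lia.
  split; [exact h4 | exact h3 | exact h2].
move=> j; have hj := odd_double_half j; rewrite -mul2n addnC in hj.
have [q2 q1 q0] := Q j./2; rewrite -hj; case: (odd j).
  rewrite (_ : (2 * j./2 + true = 2 * j./2 + 1)%N); [exact q1 | by []].
rewrite (_ : (2 * j./2 + false = 2 * j./2)%N); [exact q0 | by rewrite addn0].
Qed.

Lemma chainN : P (f 0%N 0%N) -> forall j k, P (f j k).
Proof. by move=> H j k; apply: rowchainN; apply: colchainN. Qed.
End Chain.

Lemma unit22 (M : 'M[C]_2) : unitary M -> nontrivial M -> M 1 1 != 0.
Proof.
rewrite /unitary /nontrivial => hU h0; apply/negP => /eqP h11.
have e01 := congr1 (fun A : 'M[C]_2 => A 0 1) hU; have e11 := congr1 (fun A : 'M[C]_2 => A 1 1) hU.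
move: e01 e11; rewrite !mxE !big_ord_recr !big_ord0 /= !mxE.
have w0 : widen_ord (leqnSn 1) (ord_max : 'I_1) = 0 :> 'I_2 by apply/val_inj.
have w1 : (ord_max : 'I_2) = 1 by apply/val_inj.
rewrite w0 w1 h11 !add0r mul0r addr0 => e01 e11.
move: e01; rewrite conjc0 mulr0 addr0 => /eqP; rewrite mulf_eq0 conjc_eq0 (negbTE h0) /= => /eqP h10.
by move: e11; rewrite h10 mul0r => /eqP; rewrite eq_sym oner_eq0.
Qed.


End N.


Lemma idx_b5 (i : int) s : (idx (i, s) < idx ((i + 1)%R, false) + 5)%N.
Proof. rewrite /idx /=; case: s; case: ifP; case: ifP; lia. Qed.
Lemma idx_b6 (i : int) s : (idx (i, s) < idx ((i - 1)%R, true) + 5)%N.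
Proof. rewrite /idx /=; case: s; case: ifP; case: ifP; lia. Qed.

Lemma int_updown (Q : int -> Prop) : Q 0 -> (forall i, Q i -> Q (i + 1)) ->
  (forall i, Q i -> Q (i - 1)) -> forall i, Q i.
Proof.
move=> h0 hu hd [m|m].
  elim: m => [|m IH] //; rewrite (_ : Posz m.+1 = Posz m + 1); [exact: hu | lia].
elim: m => [|m IH]; first by rewrite (_ : Negz 0 = 0 - 1); [exact: hd | lia].
rewrite (_ : Negz m.+1 = Negz m - 1); [exact: hd | lia].
Qed.

Section Z.
Variable R : realType.
Local Notation C := R[i].
Variable c : int -> 'M[C]_2.

Lemma UZ_val (i : int) (s : bool) y :
  UZ c (i, s) y = if y == (i + 1, false) then c i 0 (sp s)
                  else if y == (i - 1, true) then c i 1 (sp s) else 0.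
Proof.
case: y => j b; rewrite /UZ /= !xpair_eqE.
case: eqP => //= ?; case: eqP => //= ?; case: b => //=; lia.
Qed.

Lemma UZf_csupport m k : (k + 5 <= m)%N -> UZf c m k = 0.
Proof.
move=> hk; rewrite /UZf; case e: (fold m) => [i s].
have hm : m = idx (i, s) by rewrite -e idxK.
rewrite UZ_val; case: eqP => [e1|_].
  have := idx_b5 i s; rewrite -e1 idxK; lia.
case: eqP => [e1|_] //.
have := idx_b6 i s; rewrite -e1 idxK; lia.
Qed.

Local Notation F x y := (fun n => mpow (UZf c) n (idx x) (idx y)).

Lemma idx_inj x y : idx x = idx y -> x = y.
Proof. by move=> e; rewrite -(foldK x) -(foldK y) e. Qed.

Lemma rowZ (i : int) (s : bool) y n :
  mpow (UZf c) n.+1 (idx (i, s)) (idx y) =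
  c i 0 (sp s) * mpow (UZf c) n (idx (i + 1, false)) (idx y) +
  c i 1 (sp s) * mpow (UZf c) n (idx (i - 1, true)) (idx y).
Proof.
rewrite -[LHS]/(rf_mul (UZf c) (mpow (UZf c) n) (idx (i, s)) (idx y)) /rf_mul /UZf foldK.
have E := @sum2 _ (idx (i, s) + 5)%N (fun l => UZ c (i, s) (fold l) * mpow (UZf c) n l (idx y))
  (idx (i + 1, false)) (idx (i - 1, true)).
simpl in E; rewrite {}E.
- rewrite !foldK !UZ_val eqxx.
  by rewrite (_ : ((i - 1, true) == (i + 1, false)) = false) ?eqxx //; rewrite xpair_eqE andbF.
- by apply/eqP => /idx_inj [].
- exact: idx_b1.
- exact: idx_b2.
- move=> l h1 h2; rewrite UZ_val.
  case: eqP => [e|_]; first by move: h1; rewrite -e idxK eqxx.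
  case: eqP => [e|_]; first by move: h2; rewrite -e idxK eqxx.
  by rewrite mul0r.
Qed.

Lemma colZ1 x (j : int) n :
  mpow (UZf c) n.+1 (idx x) (idx (j, false)) =
  c (j - 1) 0 0 * mpow (UZf c) n (idx x) (idx (j - 1, false)) +
  c (j - 1) 0 1 * mpow (UZf c) n (idx x) (idx (j - 1, true)).
Proof.
rewrite (mpow_r (fun j k => @UZf_support R c j k) UZf_csupport) /UZf foldK.
have E := @sum2 _ (idx (j, false) + 5)%N (fun m => mpow (UZf c) n (idx x) m * UZ c (fold m) (j, false))
  (idx (j - 1, false)) (idx (j - 1, true)).
simpl in E; rewrite {}E.
- rewrite !foldK !UZ_val !xpair_eqE subrK !eqxx /= mulrC [X in _ + X]mulrC.
  reflexivity.
- by apply/eqP => /idx_inj [].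
- exact: idx_b3.
- exact: idx_b3.
- move=> m h1 h2; case e: (fold m) => [i s].
  have hm : m = idx (i, s) by rewrite -e idxK.
  rewrite UZ_val !xpair_eqE andbT andbF.
  case: eqP => [e1|_]; last by rewrite mulr0.
  have ei : i = j - 1 by rewrite e1 addrK.
  by case: s e hm h1 h2 => e hm; rewrite hm ei eqxx.
Qed.

Lemma colZ2 x (j : int) n :
  mpow (UZf c) n.+1 (idx x) (idx (j, true)) =
  c (j + 1) 1 0 * mpow (UZf c) n (idx x) (idx (j + 1, false)) +
  c (j + 1) 1 1 * mpow (UZf c) n (idx x) (idx (j + 1, true)).
Proof.
rewrite (mpow_r (fun j k => @UZf_support R c j k) UZf_csupport) /UZf foldK.
have E := @sum2 _ (idx (j, true) + 5)%N (fun m => mpow (UZf c) n (idx x) m * UZ c (fold m) (j, true))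
  (idx (j + 1, false)) (idx (j + 1, true)).
simpl in E; rewrite {}E.
- rewrite !foldK !UZ_val !xpair_eqE addrK !eqxx /= !andbF /= mulrC [X in _ + X]mulrC.
  done.
- by apply/eqP => /idx_inj [].
- exact: idx_b4.
- exact: idx_b4.
- move=> m h1 h2; case e: (fold m) => [i s].
  have hm : m = idx (i, s) by rewrite -e idxK.
  rewrite UZ_val !xpair_eqE andbT andbF /=.
  case: eqP => [e1|_]; last by rewrite mulr0.
  have ei : i = j + 1 by rewrite e1 subrK.
  by case: s e hm h1 h2 => e hm; rewrite hm ei eqxx.
Qed.

End Z.


Lemma idx0 : idx (0, false) = 0%N. Proof. by []. Qed.
Lemma idx1 : idx (0 - 1, true) = 1%N. Proof. by []. Qed.

Section ZC.
Variable R : realType.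
Local Notation C := R[i].
Variable c : int -> 'M[C]_2.
Hypothesis h00 : forall i, c i 0 0 != 0.
Hypothesis h11 : forall i, c i 1 1 != 0.
Variable P : (nat -> C) -> Prop.
Hypothesis hP : closedP P.
Local Notation F x y := (fun n => mpow (UZf c) n (idx x) (idx y)).

Lemma rowchainZ y : P (F (0, false) y) -> P (F (0 - 1, true) y) -> forall x, P (F x y).
Proof.
move=> H0 H1.
have Q : forall i, P (F (i, false) y) /\ P (F (i - 1, true) y).
  apply: int_updown.
  - by split.
  - move=> i [q1 q2].
    have E := rowZ c i false y.
    have hf := solveY (Y := F (i + 1, false) y) hP E (h00 i) q1 q2.
    have E2 := rowZ c i true y.
    have ht := fwdX (X := F (i, true) y) hP E2 hf q2.
    rewrite addrK; split; [exact hf | exact ht].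
  - move=> i [q1 q2].
    have E := rowZ c (i - 1) true y; rewrite subrK in E.
    have ht := solveZ (Z := F (i - 1 - 1, true) y) hP E (h11 (i - 1)) q2 q1.
    have E2 := rowZ c (i - 1) false y; rewrite subrK in E2.
    have hf := fwdX (X := F (i - 1, false) y) hP E2 q1 ht.
    split; [exact hf | exact ht].
case=> i [].
  have [_ q] := Q (i + 1); rewrite addrK in q; exact q.
exact: (Q i).1.
Qed.

Lemma colchainZ x : P (F x (0, false)) -> P (F x (0 - 1, true)) -> forall y, P (F x y).
Proof.
move=> H0 H1.
have Q : forall i, P (F x (i, false)) /\ P (F x (i - 1, true)).
  apply: int_updown.
  - by split.
  - move=> i [q1 q2].
    have E := colZ2 c x (i - 1); rewrite subrK in E.
    have ht := solveZ (Z := F x (i, true)) hP E (h11 i) q2 q1.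
    have E2 := colZ1 c x (i + 1); rewrite addrK in E2.
    have hf := fwdX (X := F x (i + 1, false)) hP E2 q1 ht.
    rewrite addrK; split; [exact hf | exact ht].
  - move=> i [q1 q2].
    have E := colZ1 c x i.
    have hf := solveY (Y := F x (i - 1, false)) hP E (h00 (i - 1)) q1 q2.
    have E2 := colZ2 c x (i - 1 - 1); rewrite subrK in E2.
    have ht := fwdX (X := F x (i - 1 - 1, true)) hP E2 hf q2.
    split; [exact hf | exact ht].
case=> i [].
  have [_ q] := Q (i + 1); rewrite addrK in q; exact q.
exact: (Q i).1.
Qed.

Lemma chainZ : (forall a b : 'I_2, P (fun n => mpow (UZf c) n a b)) ->
  forall j k, P (fun n => mpow (UZf c) n j k).
Proof.
move=> H.
have B00 : P (F (0, false) (0, false)) by exact: (H 0 0).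
have B01 : P (F (0, false) (0 - 1, true)) by exact: (H 0 1).
have B10 : P (F (0 - 1, true) (0, false)) by exact: (H 1 0).
have B11 : P (F (0 - 1, true) (0 - 1, true)) by exact: (H 1 1).
have C0 := colchainZ B00 B01.
have C1 := colchainZ B10 B11.
move=> j k; rewrite -(idxK j) -(idxK k).
exact: (rowchainZ (C0 (fold k)) (C1 (fold k))).
Qed.
End ZC.


Section Gen.
Variable R : realType.
Local Notation C := R[i].
Variable U : imx R.
Variables (B : Type) (bj bk : B -> nat).
Local Notation f j k := (fun n => mpow U n j k).
Hypothesis chain : forall P, closedP P -> (forall b, P (f (bj b) (bk b))) -> forall j k, P (f j k).

Lemma gen1 : weak_cvg (fun n => mpow U n) (fun _ _ => 0) <-> (forall b, cv (f (bj b) (bk b)) 0).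
Proof.
split.
  by move=> h b; apply/cvgCE; exact: h.
move=> h j k; apply/cvgCE.
have hal : forall n : nat, nC ((fun _ => 1 : C) n) = 1 by move=> n; exact: nC1.
have base : forall b, P0 (fun _ => 1) (f (bj b) (bk b)).
  by move=> b; rewrite /P0; apply: (cv_ext _ (h b)) => n; rewrite mul1r.
have hP := @chain (P0 (fun _ => 1)) (closedP0 hal) base j k.
rewrite /P0 in hP; by apply: (cv_ext _ hP) => n; rewrite mul1r.
Qed.

Variable al : nat -> C.
Hypothesis hal : forall n, nC (al n) = 1.

Lemma gen2 :
  (exists L : imx R, weak_cvg (fun n j k => al n * mpow U n j k) L /\ exists j k, L j k != 0)
  <->
  ((exists l : B -> C, (forall b, cv (fun n => al n * mpow U n (bj b) (bk b)) (l b)) /\ exists b, l b != 0)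
   /\ exists w, cv (fun n => al n / al n.+1) w).
Proof.
split.
  move=> [L [hL [j0 [k0 hne]]]].
  have hcv : forall j k, cv (fun n => al n * mpow U n j k) (L j k).
    by move=> j k; apply/cvgCE; exact: hL.
  split.
    exists (fun b => L (bj b) (bk b)); split; first by move=> b; exact: hcv.
    apply: NNPP => hn.
    have hz : forall b, L (bj b) (bk b) = 0.
      move=> b; apply/eqP; apply: NNPP => hb; apply: hn; exists b; exact/negP.
    have := @chain (P0 al) (closedP0 hal).
    move=> /(_ _ j0 k0) h0.
    have : L j0 k0 = 0.
      apply: (cv_unique (hcv j0 k0)); apply: h0 => b; rewrite /P0 -(hz b); exact: hcv.
    by move/eqP: hne.
  exists ((\sum_(l < j0 + 5) U j0 l * L l k0) / L j0 k0).
  have hu : cv (fun n => al n * mpow U n.+1 j0 k0) (\sum_(l < j0 + 5) U j0 l * L l k0).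
    have := cv_sum (fun (l : 'I_(j0 + 5)) => cv_scale (U j0 l) (hcv l k0)).
    apply: cv_ext => n.
    rewrite -[mpow U n.+1 j0 k0]/(rf_mul U (mpow U n) j0 k0) /rf_mul mulr_sumr.
    by apply: eq_bigr => l _; ring.
  apply: (cv_ratio hu (cv_shift (hcv j0 k0)) hne) => n.
  by field; exact: al_neq0 hal n.+1.
move=> [[l [hl [b0 hb0]]] [w hw]].
have hc := @chain (Pw al) (closedPw hal hw) (fun b => ex_intro _ (l b) (hl b)).
pose L := fun j k => proj1_sig (constructive_indefinite_description _ (hc j k)).
have hL : forall j k, cv (fun n => al n * mpow U n j k) (L j k).
  by move=> j k; rewrite /L; case: constructive_indefinite_description.
exists L; split; first by move=> j k; apply/cvgCE; exact: hL.
exists (bj b0), (bk b0); rewrite (cv_unique (hL (bj b0) (bk b0)) (hl b0)); exact: hb0.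
Qed.
End Gen.


Lemma ratio_expi (R : realType) (th : nat -> R) n :
  expi (- th n) / expi (- th n.+1) = expi (th n.+1 - th n).
Proof.
have e := expiD (th n.+1 - th n) (- th n.+1).
rewrite (_ : th n.+1 - th n + - th n.+1 = - th n) in e; last by ring.
rewrite -e mulfK //; by rewrite -nC_eq0 nC_expi oner_eq0.
Qed.

Theorem proposition1 (R : realType) :
  (* Case I = Z_{>=0} *)
  (forall c : nat -> 'M[R[i]]_2,
    (forall i, unitary (c i)) -> (forall i, nontrivial (c i)) ->
    (weak_cvg (fun n => mpow (UN c) n) (fun _ _ => 0) <-> cvgC (muN c) 0)
    /\
    (forall theta : nat -> R,
      (exists L : imx R,
         weak_cvg (fun n j k => expi (- theta n) * mpow (UN c) n j k) L
         /\ exists j k, L j k != 0)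
      <->
      ((exists l : R[i], cvgC (fun n => expi (- theta n) * muN c n) l /\ l != 0)
       /\ exists w : R[i], cvgC (fun n => expi (theta n.+1 - theta n)) w)))
  /\
  (* Case I = Z *)
  (forall c : int -> 'M[R[i]]_2,
    (forall i, unitary (c i)) -> (forall i, nontrivial (c i)) ->
    (weak_cvg (fun n => mpow (UZf c) n) (fun _ _ => 0) <-> cvg_mx2 (muZ c) 0)
    /\
    (forall theta : nat -> R,
      (exists L : imx R,
         weak_cvg (fun n j k => expi (- theta n) * mpow (UZf c) n j k) L
         /\ exists j k, L j k != 0)
      <->
      ((exists l : 'M[R[i]]_2,
          cvg_mx2 (fun n => expi (- theta n) *: muZ c n) l /\ l != 0)
       /\ exists w : R[i], cvgC (fun n => expi (theta n.+1 - theta n)) w))).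
Proof.
split.
  move=> c hu hn.
  have h00 : forall i, c i 0 0 != 0 := hn.
  have h11 : forall i, c i 1 1 != 0 := fun i => unit22 (hu i) (hn i).
  have ch : forall P, closedP P -> (forall b : unit, P (fun n => mpow (UN c) n ((fun _ => 0%N) b) ((fun _ => 0%N) b))) ->
      forall j k, P (fun n => mpow (UN c) n j k).
    by move=> P hP hb; apply: (chainN h00 h11 hP (hb tt)).
  split.
    have G := gen1 ch.
    split => [/G h | h]; first by apply/cvgCE; exact: (h tt).
    by apply/G => _; apply/cvgCE; exact: h.
  move=> th.
  have hal : forall n, nC ((fun n => expi (- th n)) n) = 1 by move=> n; exact: nC_expi.
  apply: (iff_trans (gen2 ch hal)).
  split.
    move=> [[l [hl [b hb]]] [w hw]]; split.
      exists (l b); split => //; apply/cvgCE; case: b hb => hb; exact: (hl tt).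
    exists w; apply/cvgCE; apply: (cv_ext _ hw) => n; exact: ratio_expi.
  move=> [[l [hl hl0]] [w hw]]; split.
    exists (fun _ => l); split; last by exists tt.
    by move=> _; apply/cvgCE; exact: hl.
  exists w; move/cvgCE: hw => hw; apply: (cv_ext _ hw) => n; by rewrite ratio_expi.
move=> c hu hn.
have h00 : forall i, c i 0 0 != 0 := hn.
have h11 : forall i, c i 1 1 != 0 := fun i => unit22 (hu i) (hn i).
have ch : forall P, closedP P -> (forall b : 'I_2 * 'I_2, P (fun n => mpow (UZf c) n ((fun b => nat_of_ord b.1) b) ((fun b => nat_of_ord b.2) b))) ->
    forall j k, P (fun n => mpow (UZf c) n j k).
  by move=> P hP hb; apply: (chainZ h00 h11 hP) => a b; exact: (hb (a, b)).
split.
  have G := gen1 ch.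
  split => [/G h | h].
    move=> a b; apply/cvgCE; rewrite mxE; apply: (cv_ext _ (h (a, b))) => n; by rewrite mxE.
  apply/G => b; have := h b.1 b.2; move/cvgCE; rewrite mxE; apply: cv_ext => n; by rewrite mxE.
move=> th.
have hal : forall n, nC ((fun n => expi (- th n)) n) = 1 by move=> n; exact: nC_expi.
apply: (iff_trans (gen2 ch hal)).
split.
  move=> [[l [hl [b0 hb0]]] [w hw]]; split.
    exists (\matrix_(a, b) l (a, b)); split.
      move=> a b; apply/cvgCE; rewrite mxE; apply: (cv_ext _ (hl (a, b))) => n; by rewrite !mxE.
    apply/negP => /eqP h0; move: hb0; case: b0 => a b /=.
    have := congr1 (fun M : 'M[R[i]]_2 => M a b) h0; rewrite /= !mxE => ->; by rewrite eqxx.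
  exists w; apply/cvgCE; apply: (cv_ext _ hw) => n; exact: ratio_expi.
move=> [[l [hl hl0]] [w hw]]; split.
  exists (fun b => l b.1 b.2); split.
    move=> [a b]; have := hl a b; move/cvgCE; apply: cv_ext => n; by rewrite !mxE.
  apply: NNPP => hn0; apply: (negP hl0); apply/eqP/matrixP => a b; rewrite mxE.
  apply/eqP; apply: NNPP => h; apply: hn0; exists (a, b); exact/negP.
exists w; move/cvgCE: hw => hw; apply: (cv_ext _ hw) => n; by rewrite ratio_expi.
Qed.
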